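(* Let $A$ be an $m$-dimensional binary array of size $n_1\times\cdots\times n_m$ and $\mathbb{A}$ its periodic extension. Suppose $(\alpha_1,\omega_1)\neq(\alpha_2,\omega_2)$ are two ordered pairs of distinct dots of $A$, with $\alpha_j=(a_{j1},\dots,a_{jm})$, $\omega_j=(w_{j1},\dots,w_{jm})$, such that the toroidal vectors from $\alpha_1$ to $\omega_1$ and from $\alpha_2$ to $\omega_2$ both equal $\langle h_1,\dots,h_m\rangle$. If for every $i\in[m]$ with $h_i=n_i/2$ we have either $w_{1i}-a_{1i}=w_{2i}-a_{2i}$, or ($a_{1i}\neq w_{2i}$ and $a_{2i}\neq w_{1i}$), then there is an $n_1\times\cdots\times n_m$ window of $\mathbb{A}$ having a repeated difference vector.
   Context: For $n\in\mathbb{N}$, $[n]=\{1,\dots,n\}$. An $m$-dimensional binary array of size $n_1\times\cdots\times n_m$ ($m\ge2$, all $n_i\ge 2$) is a function $A:[n_1]\times\cdots\times[n_m]\to\{0,1\}$; a dot is a point where $A$ equals 1. The periodic extension $\mathbb{A}:\mathbb{Z}^m\to\{0,1\}$ is $\mathbb{A}(a_1,\dots,a_m)=A(a_1',\dots,a_m')$ with $a_i'\in[n_i]$, $a_i'\equiv a_i\pmod{n_i}$. An $n_1\times\cdots\times n_m$ window of $\mathbb{A}$ is the restriction of $\mathbb{A}$ to a box $\prod_i\{k_i,\dots,k_i+n_i-1\}$, $k_i\in\mathbb{Z}$. The difference vector from a dot $\alpha=(a_1,\dots,a_m)$ to a distinct dot $\omega=(w_1,\dots,w_m)$ is $\langle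 w_1-a_1,\dots,w_m-a_m\rangle\in\mathbb{Z}^m$; the toroidal vector is $\langle (w_1-a_1)\bmod n_1,\dots,(w_m-a_m)\bmod n_m\rangle$ with components in $\{0,\dots,n_i-1\}$. A window has a repeated difference vector if two distinct ordered pairs of distinct dots in it have the same difference vector. *)

(* Defs.v *)
From mathcomp Require Import all_boot all_order all_algebra.
Set Implicit Arguments. Unset Strict Implicit. Unset Printing Implicit Defensive.
Import Order.TTheory GRing.Theory Num.Theory.
Local Open Scope ring_scope.

Definition point (m : nat) := {ffun 'I_m -> int}.

Definition in_box (m : nat) (n : 'I_m -> nat) (lo : 'I_m -> int) (p : point m)
  : Prop := forall i, lo i <= p i /\ p i <= lo i + (n i)%:Z - 1.

Definition in_array (m : nat) (n : 'I_m -> nat) (p : point m) : Prop :=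
  in_box n (fun _ => 1) p.

(* An array A of size n_1 x ... x n_m is represented by a function on Z^m of
   which only the values on [n_1] x ... x [n_m] matter. *)
Definition is_dot (m : nat) (n : 'I_m -> nat) (A : point m -> bool) (p : point m)
  : Prop := in_array n p /\ A p.

Definition periodic_ext (m : nat) (n : 'I_m -> nat) (A : point m -> bool)
  : point m -> bool :=
  fun p => A [ffun i => (((p i - 1) %% (n i)%:Z)%Z + 1)].

Definition diff_vec (m : nat) (alpha omega : point m) : point m :=
  [ffun i => omega i - alpha i].

Definition toroidal_vec (m : nat) (n : 'I_m -> nat) (alpha omega : point m)
  : point m :=
  [ffun i => ((omega i - alpha i) %% (n i)%:Z)%Z].

Definition window_has_repeated_diff (m : nat) (n : 'I_m -> nat)
  (AA : point m -> bool) (k : 'I_m -> int) : Prop :=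
  exists p1 q1 p2 q2 : point m,
    [/\ in_box n k p1, in_box n k q1, in_box n k p2 & in_box n k q2] /\
    [/\ AA p1, AA q1, AA p2 & AA q2] /\
    [/\ p1 != q1, p2 != q2, (p1, q1) != (p2, q2) &
        diff_vec p1 q1 = diff_vec p2 q2].

(* Main.v *)
Require Import Defs.
From mathcomp Require Import all_boot all_order all_algebra zify.
Import Order.TTheory GRing.Theory Num.Theory.
Local Open Scope ring_scope.

Lemma red (N a t P : int) : 0 < N -> 1 <= a <= N -> P = a + t * N ->
  ((P - 1) %% N)%Z + 1 = a.
Proof.
move=> N0 ha ->.
have -> : a + t * N - 1 = t * N + (a - 1) by lia.
rewrite modzMDl modz_small; first by lia.
apply/andP; split; lia.
Qed.

Lemma modeq0 (N q a b : int) : 2<=N -> 1 <= a <= N -> 1 <= b <= N ->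
  a - b = q * N -> a = b.
Proof. intros. have [q0|[q1|q2]] : q = 0 \/ 1 <= q \/ q <= -1 by lia.
subst; lia. nia. nia. Qed.

Definition G (N a1 w1 a2 w2 k P1 Q1 P2 Q2 : int) : Prop :=
  (k <= P1 /\ P1 <= k + N - 1) /\ (k <= Q1 /\ Q1 <= k + N - 1) /\
  (k <= P2 /\ P2 <= k + N - 1) /\ (k <= Q2 /\ Q2 <= k + N - 1) /\
  ((P1 - 1) %% N)%Z + 1 = a1 /\ ((Q1 - 1) %% N)%Z + 1 = w1 /\
  ((P2 - 1) %% N)%Z + 1 = a2 /\ ((Q2 - 1) %% N)%Z + 1 = w2 /\
  Q1 - P1 = Q2 - P2.

Lemma core_half (N a1 w1 a2 w2 : int) : 2 <= N ->
  1 <= a1 <= N -> 1 <= w1 <= N -> 1 <= a2 <= N -> 1 <= w2 <= N ->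
  w1 - a1 = w2 - a2 + N ->
  (2 * (w1 - a1) = N -> a1 != w2 /\ a2 != w1) ->
  exists k P1 Q1 P2 Q2, G N a1 w1 a2 w2 k P1 Q1 P2 Q2.
Proof.
move=> N2 ha1 hw1 ha2 hw2 hd hc.
have N0 : 0 < N by lia.
have Nn0 : N != 0 by lia.
set q := ((a1 - a2) %/ N)%Z. set x := ((a1 - a2) %% N)%Z.
have hq : a1 - a2 = q * N + x by exact: divz_eq.
have x0 : 0 <= x by exact: modz_ge0.
have xN : x < N by exact: ltz_pmod.
set H := w1 - a1.
have [c1|c1] := boolP (x + H <= N - 1).
  exists (a1 - x), a1, w1, (a1 - x), (a1 - x + H).
  rewrite /G; do 4 (split; first lia).
  split; first by apply: (@red _ _ (0)); lia.
  split; first by apply: (@red _ _ (0)); lia.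
  split; first by apply: (@red _ _ (q)); lia.
  split; first by apply: (@red _ _ (q+1)); lia.
  lia.
have [c2|c2] := boolP (H + 1 <= x).
  exists a1, a1, w1, (a1 - x + N), (a1 - x + N + H).
  rewrite /G; do 4 (split; first lia).
  split; first by apply: (@red _ _ (0)); lia.
  split; first by apply: (@red _ _ (0)); lia.
  split; first by apply: (@red _ _ (q+1)); lia.
  split; first by apply: (@red _ _ (q+2)); lia.
  lia.
have [c3|c3] := boolP (x <= H - 1).
  exists w2, (a2 + x), (a2 + x + H - N), a2, w2.
  rewrite /G; do 4 (split; first lia).
  split; first by apply: (@red _ _ (-q)); lia.
  split; first by apply: (@red _ _ (-q-1)); lia.
  split; first by apply: (@red _ _ (0)); lia.
  split; first by apply: (@red _ _ (0)); lia.
  lia.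
have [c4|c4] := boolP (N - H + 1 <= x).
  exists (a2 + x - 2 * N + H), (a2 + x - N), (a2 + x - 2 * N + H), a2, w2.
  rewrite /G; do 4 (split; first lia).
  split; first by apply: (@red _ _ (-q-1)); lia.
  split; first by apply: (@red _ _ (-q-2)); lia.
  split; first by apply: (@red _ _ (0)); lia.
  split; first by apply: (@red _ _ (0)); lia.
  lia.
have [/eqP h1 _] := hc ltac:(lia).
exfalso; apply: h1; apply: (@modeq0 N (q + 1)); try lia.
Qed.

Lemma core (N a1 w1 a2 w2 : int) : 2 <= N ->
  1 <= a1 <= N -> 1 <= w1 <= N -> 1 <= a2 <= N -> 1 <= w2 <= N ->
  ((w1 - a1) %% N)%Z = ((w2 - a2) %% N)%Z ->
  (2 * ((w1 - a1) %% N)%Z = N -> w1 - a1 = w2 - a2 \/ (a1 != w2 /\ a2 != w1)) ->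
  exists k P1 Q1 P2 Q2, G N a1 w1 a2 w2 k P1 Q1 P2 Q2.
Proof.
move=> N2 ha1 hw1 ha2 hw2 hm hc.
have N0 : 0 < N by lia.
have [e|ne] := eqVneq (w1 - a1) (w2 - a2).
  exists 1, a1, w1, a2, w2.
  rewrite /G; do 4 (split; first lia).
  split; first by apply: (@red _ _ 0); lia.
  split; first by apply: (@red _ _ 0); lia.
  split; first by apply: (@red _ _ 0); lia.
  split; first by apply: (@red _ _ 0); lia.
  lia.
set q1 := ((w1 - a1) %/ N)%Z. set q2 := ((w2 - a2) %/ N)%Z.
have e1 : w1 - a1 = q1 * N + ((w1 - a1) %% N)%Z by exact: divz_eq.
have e2 : w2 - a2 = q2 * N + ((w2 - a2) %% N)%Z by exact: divz_eq.
have e3 : (w1 - a1) - (w2 - a2) = (q1 - q2) * N by rewrite e1 e2 hm mulrBl; lia.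
have [c1|c2] : w1 - a1 = w2 - a2 + N \/ w2 - a2 = w1 - a1 + N.
  have [c0|[c|[c|[c|c]]]] : q1 - q2 = 0 \/ q1 - q2 = 1 \/ q1 - q2 = -1 \/
     2 <= q1 - q2 \/ q1 - q2 <= -2 by lia.
  - rewrite c0 mul0r in e3; exfalso; move/eqP: ne; lia.
  - rewrite c mul1r in e3; lia.
  - rewrite c mulN1r in e3; lia.
  - exfalso; have : 2 * N <= (q1 - q2) * N by rewrite ler_wpM2r //; lia.
    lia.
  - exfalso; have : (q1 - q2) * N <= -2 * N by rewrite ler_wpM2r //; lia.
    lia.
- have hh : ((w1 - a1) %% N)%Z = w1 - a1 by rewrite modz_small //; apply/andP; split; lia.
  apply: core_half => //.
  rewrite -hh => /hc [h|//]; exfalso; move/eqP: ne; lia.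
- have hh : ((w2 - a2) %% N)%Z = w2 - a2 by rewrite modz_small //; apply/andP; split; lia.
  have [k [P2 [Q2 [P1 [Q1 Hg]]]]] : exists k P1 Q1 P2 Q2, G N a2 w2 a1 w1 k P1 Q1 P2 Q2.
    apply: core_half => //.
    rewrite -hh -hm => /hc [h|[? ?]]; last by split.
    exfalso; move/eqP: ne; lia.
  exists k, P1, Q1, P2, Q2.
  move: Hg; rewrite /G.
  move=> [[? ?] [[? ?] [[? ?] [[? ?] [? [? [? [? ?]]]]]]]].
  do 4 (split; first lia). do 4 (split; first done). lia.
Qed.

Theorem mainTheorem3 (m : nat) (n : 'I_m -> nat) (A : point m -> bool)
    (a1 w1 a2 w2 h : point m) :
  (2 <= m)%N -> (forall i, (2 <= n i)%N) ->
  is_dot n A a1 -> is_dot n A w1 -> is_dot n A a2 -> is_dot n A w2 ->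
  a1 != w1 -> a2 != w2 -> (a1, w1) != (a2, w2) ->
  toroidal_vec n a1 w1 = h -> toroidal_vec n a2 w2 = h ->
  (forall i : 'I_m, 2 * h i = (n i)%:Z ->
     w1 i - a1 i = w2 i - a2 i \/ (a1 i != w2 i /\ a2 i != w1 i)) ->
  exists k : 'I_m -> int, window_has_repeated_diff n (periodic_ext n A) k.
Proof.
move=> m2 n2 [da1 A1] [dw1 W1] [da2 A2] [dw2 W2] ne1 ne2 ne12 t1 t2 hc.
have key : forall i, exists u : int * int * int * int * int,
    G (n i)%:Z (a1 i) (w1 i) (a2 i) (w2 i) u.1.1.1.1 u.1.1.1.2 u.1.1.2 u.1.2 u.2.
  move=> i.
  have hi := n2 i.
  have [r1 r2] := da1 i. have [r3 r4] := dw1 i.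
  have [r5 r6] := da2 i. have [r7 r8] := dw2 i.
  have eh1 : h i = ((w1 i - a1 i) %% (n i)%:Z)%Z by rewrite -t1 ffunE.
  have eh2 : h i = ((w2 i - a2 i) %% (n i)%:Z)%Z by rewrite -t2 ffunE.
  have [k [P1 [Q1 [P2 [Q2 Hg]]]]] := @core (n i)%:Z (a1 i) (w1 i) (a2 i) (w2 i)
    ltac:(lia) ltac:(lia) ltac:(lia) ltac:(lia) ltac:(lia)
    ltac:(by rewrite -eh1 -eh2) ltac:(by rewrite -eh1; apply: hc).
  by exists (k, P1, Q1, P2, Q2).
have [u hu] := fin_all_exists key.
exists (fun i => (u i).1.1.1.1).
pose p1 : point m := [ffun i => (u i).1.1.1.2].
pose q1 : point m := [ffun i => (u i).1.1.2].
pose p2 : point m := [ffun i => (u i).1.2].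
pose q2 : point m := [ffun i => (u i).2].
pose rd (p : point m) : point m := [ffun i => (((p i - 1) %% (n i)%:Z)%Z + 1)].
have rp1 : rd p1 = a1.
  by apply/ffunP => i; rewrite !ffunE; have [_ [_ [_ [_ [e _]]]]] := hu i.
have rq1 : rd q1 = w1.
  by apply/ffunP => i; rewrite !ffunE; have [_ [_ [_ [_ [_ [e _]]]]]] := hu i.
have rp2 : rd p2 = a2.
  by apply/ffunP => i; rewrite !ffunE; have [_ [_ [_ [_ [_ [_ [e _]]]]]]] := hu i.
have rq2 : rd q2 = w2.
  by apply/ffunP => i; rewrite !ffunE; have [_ [_ [_ [_ [_ [_ [_ [e _]]]]]]]] := hu i.
exists p1, q1, p2, q2.
split.
  split => i; rewrite ffunE; have [[? ?] [[? ?] [[? ?] [[? ?] _]]]] := hu i; split; lia.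
split.
  rewrite /periodic_ext.
  by split; [rewrite -/(rd p1) rp1 | rewrite -/(rd q1) rq1 | rewrite -/(rd p2) rp2 | rewrite -/(rd q2) rq2].
split.
- apply: contraNneq ne1 => e; by rewrite -rp1 -rq1 e.
- apply: contraNneq ne2 => e; by rewrite -rp2 -rq2 e.
- apply: contraNneq ne12 => [[e e']]; by rewrite -rp1 -rq1 -rp2 -rq2 e e'.
- apply/ffunP => i; rewrite !ffunE.
  by have [_ [_ [_ [_ [_ [_ [_ [_ e]]]]]]]] := hu i.
Qed.
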